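(* Let $I\subseteq E$ and let $v\in\Delta_I$ be an equilibrium ($F(v)=0$). Then $v$ is linearly stable (respectively linearly unstable) if and only if all eigenvalues of the restriction of $DF(v)$ to $V_I=\{x\in\mathbb R^N:\sum_ix_i=0,\ x_i=0\ \forall i\notin I\}$ have negative real parts (respectively, some eigenvalue of this restriction has positive real part), i.e. if and only if it is linearly stable (respectively unstable) for the restriction of $F$ to the face $\Delta_I$.
   Context: Let $N\ge2$, $E=\{1,\dots,N\}$, $\alpha>1$, and let $A=(A_{i,j})_{i,j\le N}$ be a symmetric matrix with nonnegative entries, $A_{i,j}>0$ for $i\ne j$, and $\sum_j A_{i,j}$ independent of $i$. Let $\Delta=\{v\in\mathbb R_+^N:\ \sum_i v_i=1,\ v_i\le 3/4 \text{ whenever } A_{i,i}=0\}$ and $\Delta_I=\{v\in\Delta: v_i=0\ \forall i\notin I\}$. For $v$ with nonnegative coordinates let $v^\alpha=(v_i^\alpha)_i$, $H(v)=\sum_{i,j}A_{i,j}v_i^\alpha v_j^\alpha$ and $\pi_i(v)=v_i^\alpha(Av^\alpha)_i/H(v)$; on $\Delta$, $F(v)=-v+\pi(v)$, and $DF(v)$ is the differential at $v$ of $v\mapsto-v+\pi(v)$, viewed as a linear map of $T_0\Delta=\{x:\sum_ix_i=0\}$ (the subspace $V_I$ is invariant under it when $v\in\Delta_I$ is an equilibrium). An equilibrium $v$ is linearly stable if all eigenvalues of $DF(v)$ have negative real parts, and linearly unstable if one of them has positive real part. *)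

(* Defs.v *)
From HB Require Import structures.
From mathcomp Require Import all_boot all_order all_algebra.
From mathcomp Require Import all_classical all_reals all_analysis.
From mathcomp Require Import complex.
Set Implicit Arguments. Unset Strict Implicit. Unset Printing Implicit Defensive.
Import Order.TTheory GRing.Theory Num.Theory.
Local Open Scope ring_scope.
Local Open Scope complex_scope.

Section Replicator.
Context {R : realType} {N : nat}.

(* v^alpha, coordinatewise; |.| makes the map defined (and C^1, since alpha>1)
   on all of R^N, agreeing with v_i^alpha on nonnegative coordinates. *)
Definition vpow (alpha : R) (v : 'rV[R]_N) : 'rV[R]_N :=
  \row_i (`|v ord0 i| `^ alpha).

Definition Hf (A : 'M[R]_N) (alpha : R) (v : 'rV[R]_N) : R :=
  \sum_i \sum_j A i j * vpow alpha v ord0 i * vpow alpha v ord0 j.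

Definition pi_map (A : 'M[R]_N) (alpha : R) (v : 'rV[R]_N) : 'rV[R]_N :=
  \row_i (vpow alpha v ord0 i * (\sum_j A i j * vpow alpha v ord0 j)
          / Hf A alpha v).

Definition Fmap (A : 'M[R]_N) (alpha : R) (v : 'rV[R]_N) : 'rV[R]_N :=
  - v + pi_map A alpha v.

Definition differential (f : 'rV[R]_N -> 'rV[R]_N) := fun v => 'd f v.
Definition DF (A : 'M[R]_N) (alpha : R) (v : 'rV[R]_N) : 'rV[R]_N -> 'rV[R]_N :=
  fun x => differential (Fmap A alpha) v x.

Definition in_Delta (A : 'M[R]_N) (v : 'rV[R]_N) : Prop :=
  [/\ forall i, 0 <= v ord0 i,
      \sum_i v ord0 i = 1
    & forall i, A i i = 0 -> v ord0 i <= 3 / 4].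

Definition in_face (A : 'M[R]_N) (I : {set 'I_N}) (v : 'rV[R]_N) : Prop :=
  in_Delta A v /\ forall i, i \notin I -> v ord0 i = 0.

Definition cplx_lin (L : 'rV[R]_N -> 'rV[R]_N) (z : 'rV[R[i]]_N) : 'rV[R[i]]_N :=
  \row_k ((L (map_mx (@complex.Re R) z)) ord0 k +i* (L (map_mx (@complex.Im R) z)) ord0 k).

(* Complexifications of the real subspaces T_0 Delta and V_I. *)
Definition T0 (z : 'rV[R[i]]_N) : Prop := \sum_i z ord0 i = 0.
Definition VI (I : {set 'I_N}) (z : 'rV[R[i]]_N) : Prop :=
  T0 z /\ forall i, i \notin I -> z ord0 i = 0.

(* lam is an eigenvalue of the restriction of L to the (L-invariant) subspace W:
   there is a nonzero (complex) eigenvector of L lying in (the complexification of) W. *)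
Definition eigenvalue_on (L : 'rV[R]_N -> 'rV[R]_N) (W : 'rV[R[i]]_N -> Prop)
  (lam : R[i]) : Prop :=
  exists z, [/\ W z, z != 0 & cplx_lin L z = lam *: z].

Definition lin_stable_on (L : 'rV[R]_N -> 'rV[R]_N) (W : 'rV[R[i]]_N -> Prop) : Prop :=
  forall lam, eigenvalue_on L W lam -> complex.Re lam < 0.

Definition lin_unstable_on (L : 'rV[R]_N -> 'rV[R]_N) (W : 'rV[R[i]]_N -> Prop) : Prop :=
  exists lam, eigenvalue_on L W lam /\ 0 < complex.Re lam.

End Replicator.

(* Main.v *)
Require Import Defs.
From HB Require Import structures.
From mathcomp Require Import all_boot all_order all_algebra.
From mathcomp Require Import all_classical all_reals all_analysis.
From mathcomp Require Import complex.
Import Order.TTheory GRing.Theory Num.Theory.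
Import numFieldNormedType.Exports.
Local Open Scope ring_scope.
Local Open Scope classical_set_scope.

Section S.
Context {R : realType}.

Definition pabs (a : R) := fun s : R => `|s| `^ a.
Lemma pabs_cvg0 (a : R) : 1 < a ->
  (fun h : R => h^-1 *: (pabs a (h *: (1:R) + 0) - pabs a 0)) @ 0^' --> 0.
Proof.
move=> a1; apply/cvgr0Pnorm_lt => e e0.
have a10 : 0 < a - 1 by rewrite subr_gt0.
have := powR_cvg0 a10 => /cvgr0Pnorm_lt /(_ e e0).
rewrite near_withinE /= => /nbhs_normP [d /= d0 Hd].
rewrite /pabs near_withinE; apply/nbhs_normP; exists d => // s /= sd sn0.
rewrite sub0r normrN in sd.
rewrite normrZ normfV addr0 normr0 /GRing.scale /= mulr1 powR0 ?gt_eqF ?(lt_trans ltr01) // subr0.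
have ns0 : 0 < `|s| by rewrite normr_gt0.
have := Hd `|s|; rewrite /= distrC subr0 normr_id => /(_ sd ns0).
move=> H.
have -> : `|s| `^ a = `|s| `^ (a - 1) * `|s|.
  by rewrite -{3}(powRr1 (normr_ge0 s)) -powRD ?subrK // (gt_eqF ns0) implybT.
rewrite normrM (normr_id s) mulrCA mulVf ?gt_eqF // mulr1.
by rewrite ger0_norm ?powR_ge0 // in H *.
Qed.

Lemma pabs_der0 (a : R) : 1 < a -> derivable (fun s : R => `|s| `^ a) 0 1.
Proof. by move=> a1; apply/cvg_ex; exists 0; apply: pabs_cvg0. Qed.

Lemma pabs_diff (a t : R) : 1 < a -> 0 <= t ->
  differentiable (fun s : R => `|s| `^ a) t.
Proof.
move=> a1; rewrite le_eqVlt => /orP [/eqP <-|t0].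
  by apply/derivable1_diffP; apply: pabs_der0.
apply/derivable1_diffP.
have hd : derivable (fun s : R => s `^ a) t 1 by apply: derivable_powR; rewrite in_itv /= t0.
apply: (near_eq_derivable _ hd).
near=> s; rewrite /= gtr0_norm //; near: s; exact: lt_nbhsr.
Unshelve. all: by end_near. Qed.

Lemma pabs_d0 (a : R) : 1 < a -> forall h, 'd (fun s : R => `|s| `^ a) 0 h = 0.
Proof.
move=> a1 h; rewrite deriv1E; last exact: pabs_der0.
rewrite derive1E /derive.
transitivity (h *: (0:R)); last by rewrite scaler0.
congr (_ *: _); apply: cvg_lim => //.
exact: (pabs_cvg0 a a1).
Qed.

End S.

Section Vec.
Context {R : realType} {N : nat}.
Local Notation V := 'rV[R]_N.

Lemma dcoord (j : 'I_N) (x : V) : differentiable (fun w : V => w ord0 j) x.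
Proof. exact: differentiable_coord. Qed.

Lemma dcoord_val (j : 'I_N) (x h : V) : 'd (fun w : V => w ord0 j) x h = h ord0 j.
Proof.
have @f : {linear V -> R}.
  by exists (fun M : V => M ord0 j); do 2![eexists]; do ?[constructor];
     rewrite ?mxE// => ? *; rewrite ?mxE//; move=> ?; rewrite !mxE.
rewrite (_ : (fun _ => _) = f) //.
by rewrite diff_lin //; exact: coord_continuous.
Qed.

Lemma dsum n (F : 'I_n -> V -> R) (x : V) :
  (forall i, differentiable (F i) x) -> differentiable (fun w => \sum_i F i w) x.
Proof.
move=> H; rewrite (_ : (fun w => _) = \sum_i F i); first exact: differentiable_sum.
by apply/funext => w; rewrite fct_sumE.
Qed.

Lemma dmul (f g : V -> R) (x : V) : differentiable f x -> differentiable g x ->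
  differentiable (fun w => f w * g w) x.
Proof. exact: differentiableM. Qed.

Lemma dcst (c : R) (x : V) : differentiable (fun _ : V => c) x.
Proof. exact: differentiable_cst. Qed.

Lemma dvpow (alpha : R) (j : 'I_N) (x : V) : 1 < alpha -> 0 <= x ord0 j ->
  differentiable (fun w : V => vpow alpha w ord0 j) x.
Proof.
move=> a1 xj.
rewrite (_ : (fun w => _) = (fun s : R => `|s| `^ alpha) \o (fun w : V => w ord0 j)).
  apply: differentiable_comp; first exact: dcoord.
  exact: pabs_diff.
by apply/funext => w; rewrite /vpow mxE.
Qed.

Lemma dvpow0 (alpha : R) (j : 'I_N) (x h : V) : 1 < alpha -> x ord0 j = 0 ->
  'd (fun w : V => vpow alpha w ord0 j) x h = 0.
Proof.
move=> a1 xj.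
rewrite (_ : (fun w => _) = (fun s : R => `|s| `^ alpha) \o (fun w : V => w ord0 j)).
  rewrite diff_comp; last first.
    by apply: pabs_diff; rewrite // xj.
    exact: dcoord.
  by rewrite /= xj pabs_d0.
by apply/funext => w; rewrite /vpow mxE.
Qed.

Lemma dHf (A : 'M[R]_N) (alpha : R) (x : V) : 1 < alpha ->
  (forall i, 0 <= x ord0 i) -> differentiable (Hf A alpha) x.
Proof.
move=> a1 hx; rewrite /Hf; apply: dsum => i; apply: dsum => j.
apply: dmul; [apply: dmul; [exact: dcst | exact: dvpow] | exact: dvpow].
Qed.

Lemma pik_eq (A : 'M[R]_N) (alpha : R) (k : 'I_N) :
  (fun w => pi_map A alpha w ord0 k) =
  (fun w => vpow alpha w ord0 k * ((\sum_j A k j * vpow alpha w ord0 j) * (Hf A alpha w)^-1)).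
Proof. by apply/funext => w; rewrite /pi_map mxE mulrA. Qed.

Lemma dpik (A : 'M[R]_N) (alpha : R) (k : 'I_N) (x : V) : 1 < alpha ->
  (forall i, 0 <= x ord0 i) -> Hf A alpha x != 0 ->
  differentiable (fun w => pi_map A alpha w ord0 k) x.
Proof.
move=> a1 hx hH; rewrite pik_eq.
apply: dmul; first exact: dvpow.
apply: dmul; first by apply: dsum => j; apply: dmul; [exact: dcst|exact: dvpow].
apply: differentiableV => //; exact: dHf.
Qed.

Lemma dpi (A : 'M[R]_N) (alpha : R) (x : V) : 1 < alpha ->
  (forall i, 0 <= x ord0 i) -> Hf A alpha x != 0 ->
  differentiable (pi_map A alpha) x.
Proof.
move=> a1 hx hH.
rewrite (_ : pi_map A alpha =
   \sum_(k < N) (fun w => pi_map A alpha w ord0 k *: (delta_mx ord0 k : V))).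
  apply: differentiable_sum => k; apply: differentiableZl; exact: dpik.
apply/funext => w; rewrite fct_sumE.
by rewrite {1}(matrix_sum_delta (pi_map A alpha w)) big_ord1.
Qed.

Lemma dFmap (A : 'M[R]_N) (alpha : R) (x : V) : 1 < alpha ->
  (forall i, 0 <= x ord0 i) -> Hf A alpha x != 0 ->
  differentiable (Fmap A alpha) x.
Proof.
move=> a1 hx hH.
have did : differentiable (@id V) x by case: (is_diff_id x).
have -> : Fmap A alpha = (- (@id V)) + pi_map A alpha by apply/funext.
apply: differentiableD; last exact: dpi.
exact: differentiableN.
Qed.
Lemma addmxE' (a b : V) i : (a + b) ord0 i = a ord0 i + b ord0 i.
Proof. by rewrite mxE. Qed.
Lemma oppmxE' (a : V) i : (- a) ord0 i = - a ord0 i.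
Proof. by rewrite mxE. Qed.

Lemma gen1 (f : V -> V) (x h : V) k : differentiable f x ->
  'd f x h ord0 k = 0 -> 'd (- (@id V) + f) x h ord0 k = - h ord0 k.
Proof.
move=> df f0.
have did : differentiable (@id V) x by case: (is_diff_id x).
have vid : 'd (@id V) x = id :> (V -> V) by case: (is_diff_id x).
have D1 := diffD (differentiableN did) df.
have D2 := diffN did.
have D1' := congr1 (fun g : V -> V => g h ord0 k) D1.
have D2' := congr1 (fun g : V -> V => g h ord0 k) D2.
simpl in D1', D2'.
rewrite D1' addmxE'.
transitivity ('d (- (@id V)) x h ord0 k + 0); first by congr (_ + _).
rewrite addr0 D2'.
have D3 : (- ('d (@id V) x : V -> V)) h = - h.
  have := congr1 (fun g : V -> V => - g h) vid; rewrite /= => <-.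
  by [].
by rewrite D3 oppmxE'.
Qed.

Lemma gen2 (G : V -> V) (x h : V) k : differentiable G x ->
  'd G x h ord0 k = 'd (fun w => G w ord0 k) x h.
Proof.
move=> dG.
have E := congr1 (fun f => f h) (@diff_comp _ _ _ _ G (fun w : V => w ord0 k) x dG (dcoord k _)).
have E2 := dcoord_val k (G x) ('d G x h).
exact: (etrans (esym E2) (esym E)).
Qed.

Lemma gen3 (p q : V -> R) (x h : V) : differentiable p x -> differentiable q x ->
  p x = 0 -> 'd p x h = 0 -> 'd (fun w => p w * q w) x h = 0.
Proof.
move=> dp dq p0 dp0.
have E := congr1 (fun f => f h) (diffM dp dq).
apply: (etrans E) => /=.
have -> : (p x \*: 'd q x + q x \*: 'd p x) h = p x * 'd q x h + q x * 'd p x h by [].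
rewrite p0 mul0r add0r.
by rewrite dp0 mulr0.
Qed.

Lemma DF_comp (A : 'M[R]_N) (alpha : R) (x h : V) (k : 'I_N) : 1 < alpha ->
  (forall i, 0 <= x ord0 i) -> Hf A alpha x != 0 -> x ord0 k = 0 ->
  'd (Fmap A alpha) x h ord0 k = - h ord0 k.
Proof.
move=> a1 hx hH xk.
have -> : Fmap A alpha = (- (@id V)) + pi_map A alpha by apply/funext.
apply: gen1; first exact: dpi.
rewrite gen2; last exact: dpi.
rewrite pik_eq; apply: gen3.
- exact: dvpow.
- apply: dmul; first by apply: dsum => j; apply: dmul; [exact: dcst|exact: dvpow].
  apply: differentiableV => //; exact: dHf.
- by rewrite /vpow mxE xk normr0 powR0 // gt_eqF // (lt_trans ltr01).
- exact: dvpow0.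
Qed.
Lemma cplx_neg (L : V -> V) (z : 'rV[R[i]]_N) i :
  (forall h, L h ord0 i = - h ord0 i) -> cplx_lin L z ord0 i = - z ord0 i.
Proof.
move=> HL; rewrite /cplx_lin mxE !HL !mxE.
by case: (z ord0 i) => a b.
Qed.
End Vec.

Local Close Scope classical_set_scope.

Theorem corollary3p8 (R : realType) (N : nat) (A : 'M[R]_N) (alpha : R)
    (I : {set 'I_N}) (v : 'rV[R]_N) :
  (2 <= N)%N ->
  1 < alpha ->
  A^T = A ->
  (forall i j, 0 <= A i j) ->
  (forall i j, i != j -> 0 < A i j) ->
  (forall i k, \sum_j A i j = \sum_j A k j) ->
  in_face A I v ->
  Fmap A alpha v = 0 ->
  (lin_stable_on (DF A alpha v) T0 <-> lin_stable_on (DF A alpha v) (VI I)) /\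
  (lin_unstable_on (DF A alpha v) T0 <-> lin_unstable_on (DF A alpha v) (VI I)).
Proof.
move=> N2 a1 Asym Ange Apos Arow [[vnn vsum v34] vI] Fv0.
have hH : Hf A alpha v != 0.
  apply/negP => /eqP H0.
  have v0 : v = 0.
    move: Fv0; rewrite /Fmap.
    have -> : pi_map A alpha v = 0 by apply/rowP => i; rewrite !mxE H0 invr0 mulr0.
    by rewrite addr0 => /eqP; rewrite oppr_eq0 => /eqP.
  move: vsum; rewrite v0; under eq_bigr do rewrite mxE.
  by rewrite big1 // => /eqP; rewrite eq_sym oner_eq0.
have Dk : forall k, k \notin I -> forall h, DF A alpha v h ord0 k = - h ord0 k.
  by move=> k kI h; apply: DF_comp => //; apply: vI.
have dich : forall lam, eigenvalue_on (DF A alpha v) T0 lam ->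
    eigenvalue_on (DF A alpha v) (VI I) lam \/ lam = -1.
  move=> lam [z [Tz nz Ez]].
  case: (pselect (forall i, i \notin I -> z ord0 i = 0)) => H.
    by left; exists z; split.
  right; move/existsNP: H => [i /not_implyP [iI ziN]].
  have := congr1 (fun m : 'rV[R[i]]_N => m ord0 i) Ez; rewrite /= (cplx_neg _ _ _ (Dk i iI)) mxE => E.
  have zi0 : z ord0 i != 0 by apply/eqP.
  apply: (mulIf zi0); by rewrite mulN1r E.
have Rem1 : complex.Re (-1 : R[i]) < 0 by rewrite /= ltrN10.
split; split.
- move=> HS lam [z [[Tz Hz] nz Ez]]; apply: HS; by exists z; split.
- move=> HS lam Hl; case: (dich lam Hl) => [/HS //|->]; exact: Rem1.
- move=> [lam [Hl Hp]]; case: (dich lam Hl) => [H|E].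
    by exists lam.
  by move: Hp; rewrite E => /(lt_trans Rem1); rewrite ltxx.
- move=> [lam [[z [[Tz Hz] nz Ez]] Hp]]; exists lam; split => //; by exists z.
Qed.
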